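(* Let $r\ge 2$ and let $S$ be a mutual-visibility set of the glued binary tree $GT(r)$. If $|S\cap V_r^{(1)}|\ge 2$, then to each vertex $v\in S\cap V_r^{(1)}$ one can assign a pair of twin quasi-leaves belonging to $T_v$ and not belonging to $S$, in such a way that the pairs assigned to distinct vertices of $S\cap V_r^{(1)}$ are pairwise disjoint.
   Context: A perfect binary tree of depth $r\ge1$ is a rooted tree in which every non-leaf vertex has exactly $2$ children and all leaves have depth $r$. The glued binary tree $GT(r)$ is obtained from two copies $T_r^{(1)}$ and $T_r^{(2)}$ of the perfect binary tree of depth $r$ by pairwise identifying their leaves (via a fixed isomorphism of the copies). The identified vertices are the quasi-leaves; $L(GT(r))=V(T_r^{(1)})\cap V(T_r^{(2)})$ is the set of quasi-leaves, and $V_r^{(i)}=V(T_r^{(i)})\setminus L(GT(r))$ for $i\in\{1,2\}$. Two quasi-leaves $u,v$ with $N(u)=N(v)$ are twin quasi-leaves. For a vertex $u\in V_r^{(1)}$ (resp. $V_r^{(2)}$), $T_u$ denotes the subtree of $T_r^{(1)}$ (resp. $T_r^{(2)}$) rooted at $u$ consisting of $u$ and all its descendants, its leaves being the quasi-leaves that are descendants of $u$. For $S\subseteq V(G)$, two vertices $u,v$ are $S$-visible if there exists a shortest $u,v$-path $P$ with $V(P)\cap S\subseteq\{u,v\}$; $S$ is a mutual-visibility set if every two vertices of $S$ are $S$-visible. *)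

(* Defs.v *)
From mathcomp Require Import all_boot.
Set Implicit Arguments. Unset Strict Implicit. Unset Printing Implicit Defensive.

(* Vertices of a perfect binary tree of depth r are encoded by heap indices
   h in [1, 2^(r+1)): root = 1, children of h are 2h and 2h+1, depth of h is
   floor(log2 h), leaves are the h with 2^r <= h < 2^(r+1).
   A vertex of GT(r) is a pair (c, h): c = true means copy T^(1), c = false
   means copy T^(2).  Quasi-leaves (the identified leaves) are represented
   only with c = false (the identification is the identity on heap indices). *)

Definition gt_valid (r : nat) (x : bool * 'I_(2 ^ r.+1)) : bool :=
  (1 <= val x.2) && ((val x.2 < 2 ^ r) || ~~ x.1).

Definition GTV (r : nat) : finType := {x : bool * 'I_(2 ^ r.+1) | @gt_valid r x}.

Section GT.
Variable r : nat.

Definition gcopy (v : GTV r) : bool := (val v).1.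
Definition gidx (v : GTV r) : nat := val (val v).2.

Definition quasi_leaf (v : GTV r) : bool := 2 ^ r <= gidx v.

Definition inV1 (v : GTV r) : bool := ~~ quasi_leaf v && gcopy v.
Definition inV2 (v : GTV r) : bool := ~~ quasi_leaf v && ~~ gcopy v.

Definition V1 : {set GTV r} := [set v | inV1 v].

(* w is a child of u in one of the two trees *)
Definition gchild (u w : GTV r) : bool :=
  ((gidx w)./2 == gidx u) && ((gcopy u == gcopy w) || quasi_leaf w).

Definition gadj : rel (GTV r) := fun u w => gchild u w || gchild w u.

Definition nbhd (u : GTV r) : {set GTV r} := [set w | gadj u w].

Definition twin_quasi_leaves (a b : GTV r) : Prop :=
  [/\ quasi_leaf a, quasi_leaf b, a != b & nbhd a = nbhd b].

(* the leaves of T_v: quasi-leaves that are descendants of v *)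
Definition leaf_of_subtree (v w : GTV r) : bool :=
  quasi_leaf w && [exists k : 'I_r.+1, gidx w %/ 2 ^ k == gidx v].

(* p is a shortest u,v-path: the walk u :: p *)
Definition shortest_path (u v : GTV r) (p : seq (GTV r)) : Prop :=
  [/\ path gadj u p, last u p = v &
      forall q, path gadj u q -> last u q = v -> size p <= size q].

Definition S_visible (S : {set GTV r}) (u v : GTV r) : Prop :=
  exists p, shortest_path u v p /\
    forall x, x \in u :: p -> x \in S -> x = u \/ x = v.

Definition mutual_visibility (S : {set GTV r}) : Prop :=
  forall u v, u \in S -> v \in S -> S_visible S u v.

End GT.

(* Main.v *)
Require Import Defs.
From mathcomp Require Import all_boot zify.
Set Implicit Arguments. Unset Strict Implicit. Unset Printing Implicit Defensive.


Lemma gidx_gt0 r (a : GTV r) : 0 < gidx a.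
Proof. by case: a => [[c o] h]; have /andP[] := h. Qed.
Lemma gidx_lt r (a : GTV r) : gidx a < 2 ^ r.+1.
Proof. exact: ltn_ord. Qed.
Lemma gvalid r (a : GTV r) : (gidx a < 2 ^ r) || ~~ gcopy a.
Proof. by case: a => [[c o] h]; have /andP[] := h. Qed.
Lemma vert_eq r (a b : GTV r) : gcopy a = gcopy b -> gidx a = gidx b -> a = b.
Proof.
case: a b => [[c o] h] [[c' o'] h']; rewrite /gcopy /gidx /= => E1 E2.
apply: val_inj => /=; congr pair => //; exact: val_inj.
Qed.


Definition desc (m c : nat) : Prop := exists j, m %/ 2 ^ j = c.

Lemma divS m j : m %/ 2 ^ j.+1 = m./2 %/ 2 ^ j.
Proof. by rewrite expnS divnMA divn2. Qed.

Lemma divD m i j : m %/ 2 ^ (i + j) = m %/ 2 ^ i %/ 2 ^ j.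
Proof. by rewrite expnD divnMA. Qed.

Lemma desc_refl m : desc m m.
Proof. by exists 0; rewrite expn0 divn1. Qed.

Lemma desc_trans m a b : desc m a -> desc a b -> desc m b.
Proof. by move=> [i <-] [j <-]; exists (i + j); rewrite divD. Qed.

Lemma desc_le m c : desc m c -> c <= m.
Proof. by move=> [j <-]; apply: leq_div. Qed.

Lemma desc_child m n c : m./2 = n -> desc m c -> m = c \/ desc n c.
Proof.
move=> Hm [[|j] <-]; first by left; rewrite expn0 divn1.
by right; exists j; rewrite divS Hm.
Qed.

Lemma desc_parent m n c : m./2 = n -> desc n c -> desc m c.
Proof. by move=> Hm [j <-]; exists j.+1; rewrite divS Hm. Qed.

Lemma desc_split m n : desc m n -> m <> n -> desc m n.*2 \/ desc m n.*2.+1.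
Proof.
move=> [[|j] Hj] Hne; first by rewrite expn0 divn1 in Hj.
have : (m %/ 2 ^ j)./2 = n by rewrite -divn2 -divnMA -expnSr.
move=> H.
have [E|E] : m %/ 2 ^ j = n.*2 \/ m %/ 2 ^ j = n.*2.+1 by lia.
- by left; exists j.
- by right; exists j.
Qed.

Lemma desc_comp m a b : desc m a -> desc m b -> desc a b \/ desc b a.
Proof.
move=> [i <-] [j <-]; case: (leqP i j) => H.
- by left; exists (j - i); rewrite -divD subnKC.
- by right; exists (i - j); rewrite -divD subnKC // ltnW.
Qed.

Lemma desc_excl m n : 0 < n -> desc m n.*2 -> desc m n.*2.+1 -> False.
Proof.
move=> n0 H1 H2; case: (desc_comp H1 H2) => H.
- by move/desc_le: H; rewrite ltnn.
- have := @desc_child n.*2.+1 n n.*2; case => //. lia.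
  move=> E; lia.
  move/desc_le; lia.
Qed.

Definition descb (m c : nat) : bool := [exists j : 'I_m.+1, m %/ 2 ^ j == c].

Lemma descP m c : 0 < c -> reflect (desc m c) (descb m c).
Proof.
move=> c0; apply: (iffP existsP).
- by move=> [j /eqP Hj]; exists j.
- move=> [j Hj].
  have Hj' : j < m.+1.
    have : 0 < m %/ 2 ^ j by rewrite Hj.
    rewrite divn_gt0 ?expn_gt0 // => H.
    apply: leq_trans (ltn_expl j (isT : 1 < 2)) _; lia.
  by exists (Ordinal Hj'); rewrite /= Hj.
Qed.

Lemma desc_bound r m c : desc m c -> 0 < c -> m < 2 ^ r.+1 ->
  [exists k : 'I_r.+1, m %/ 2 ^ k == c].
Proof.
move=> [j Hj] c0 Hm.
have : 0 < m %/ 2 ^ j by rewrite Hj.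
rewrite divn_gt0 ?expn_gt0 // => H.
have Hj' : j < r.+1 by rewrite -(ltn_exp2l _ _ (isT : 1 < 2)); apply: leq_ltn_trans H Hm.
by apply/existsP; exists (Ordinal Hj'); rewrite /= Hj.
Qed.


Lemma gadj_idx r (a b : GTV r) : gadj a b -> (gidx b)./2 = gidx a \/ (gidx a)./2 = gidx b.
Proof. by rewrite /gadj /gchild => /orP[/andP[/eqP H _]|/andP[/eqP H _]]; [left|right]. Qed.

Lemma walk_anc r (A : GTV r) s : path (@gadj r) A s ->
  exists j1 j2, [/\ 0 < gidx A %/ 2 ^ j1,
     gidx A %/ 2 ^ j1 = gidx (last A s) %/ 2 ^ j2 & j1 + j2 <= size s].
Proof.
elim: s A => [|B s IH] A /=.
  by move=> _; exists 0, 0; rewrite expn0 divn1 gidx_gt0.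
move=> /andP[HAB /IH [i1 [i2 [P E L]]]].
case: (gadj_idx HAB) => H.
- case: i1 P E L => [|i] P E L.
  + exists 0, i2.+1; rewrite expn0 divn1 gidx_gt0; split; [done| |by move: L; rewrite !add0n].
    by move: E; rewrite expn0 divn1 -H => ->; rewrite -divn2 -divnMA -expnSr.
  + exists i, i2; rewrite -E divS H; split; [by rewrite -H -divS|done|]. by apply: leq_trans (leqW L); rewrite addSn.
- exists i1.+1, i2; rewrite divS H; split; [done|done|]. by rewrite addSn ltnS.
Qed.

Lemma walk_sep r (A : GTV r) s n c : path (@gadj r) A s ->
  (forall y, y \in A :: s -> gidx y != n) -> c./2 = n ->
  (desc (gidx A) c <-> desc (gidx (last A s)) c).
Proof.
move=> + + Hc.
elim: s A => [|B s IH] A //= /andP[HAB Hp] Hy.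
rewrite -IH //; last by move=> y Hy'; apply: Hy; rewrite inE Hy' orbT.
have HA : gidx A != n by apply: Hy; rewrite inE eqxx.
have HB : gidx B != n by apply: Hy; rewrite !inE eqxx orbT.
case: (gadj_idx HAB) => H; split => D.
- exact: desc_parent H D.
- case: (desc_child H D) => // E. by move: HA; rewrite -H E Hc eqxx.
- case: (desc_child H D) => // E. by move: HB; rewrite -H E Hc eqxx.
- exact: desc_parent H D.
Qed.

Lemma walk_copy r (A : GTV r) s : path (@gadj r) A s ->
  (forall y, y \in A :: s -> ~~ quasi_leaf y) -> gcopy (last A s) = gcopy A.
Proof.
elim: s A => [|B s IH] A //= /andP[HAB Hp] Hy.
rewrite IH //; last by move=> y Hy'; apply: Hy; rewrite inE Hy' orbT.
have HA := Hy A (mem_head _ _).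
have HB : ~~ quasi_leaf B by apply: Hy; rewrite !inE eqxx orbT.
move: HAB; rewrite /gadj /gchild => /orP[/andP[_ /orP[/eqP ->|Q]]|/andP[_ /orP[/eqP ->|Q]]] //.
- by rewrite Q in HB.
- by rewrite Q in HA.
Qed.

Definition tv r (d : GTV r) (h : nat) : GTV r := insubd d ((h < 2 ^ r), insubd (val d).2 h).

Lemma tv_val r (d : GTV r) h : 0 < h < 2 ^ r.+1 ->
  gidx (tv d h) = h /\ gcopy (tv d h) = (h < 2 ^ r).
Proof.
move=> /andP[h0 h1].
have Hv : gt_valid ((h < 2 ^ r), insubd (val d).2 h : 'I_(2 ^ r.+1)).
  by rewrite /gt_valid /= val_insubd h1 h0 /=; case: (h < 2 ^ r).
by rewrite /gidx /gcopy /tv val_insubd Hv /= val_insubd h1.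
Qed.

Lemma tv_id r (d a : GTV r) : ~~ inV2 a -> tv d (gidx a) = a.
Proof.
move=> H; have X : 0 < gidx a < 2 ^ r.+1 by rewrite gidx_gt0 gidx_lt.
have [E1 E2] := tv_val d X.
apply: vert_eq => //; rewrite E2.
move: H (gvalid a); rewrite /inV2 /quasi_leaf.
by case: (gcopy a); case: ltnP.
Qed.

Fixpoint upw r (d : GTV r) (h k : nat) : seq (GTV r) :=
  if k is k'.+1 then tv d h./2 :: upw d h./2 k' else [::].

Lemma size_upw r (d : GTV r) k h : size (upw d h k) = k.
Proof. by elim: k h => [|k IH] h //=; rewrite IH. Qed.

Lemma tv_adj r (d : GTV r) h : 0 < h./2 -> h < 2 ^ r.+1 -> gadj (tv d h) (tv d h./2).
Proof.
move=> h2 hr.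
have X1 : 0 < h < 2 ^ r.+1 by rewrite hr andbT; lia.
have X2 : 0 < h./2 < 2 ^ r.+1 by rewrite h2 /=; lia.
have [E1 C1] := tv_val d X1; have [E2 C2] := tv_val d X2.
rewrite /gadj /gchild E1 E2 eqxx /= C1 C2 /quasi_leaf E1.
apply/orP; right; case: (ltnP h (2 ^ r)) => Hh; last by rewrite orbT.
by have -> : h./2 < 2 ^ r by lia.
Qed.

Lemma upw_path r (d : GTV r) k h : 0 < h %/ 2 ^ k -> h < 2 ^ r.+1 ->
  path (@gadj r) (tv d h) (upw d h k) /\ last (tv d h) (upw d h k) = tv d (h %/ 2 ^ k).
Proof.
elim: k h => [|k IH] h /=.
  by rewrite expn0 divn1.
rewrite divS => H1 H2.
have h2 : 0 < h./2.
  by move: H1; rewrite divn_gt0 ?expn_gt0 // => /(leq_trans _); apply; rewrite expn_gt0.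
have hh : h./2 < 2 ^ r.+1 by lia.
have [P L] := IH h./2 H1 hh.
by rewrite L P tv_adj.
Qed.

Lemma gadj_sym r (a b : GTV r) : gadj a b = gadj b a.
Proof. by rewrite /gadj orbC. Qed.

Lemma last_rev_belast (T : Type) (x : T) s : last (last x s) (rev (belast x s)) = x.
Proof. by case: s => [|a s] //=; rewrite rev_cons last_rcons. Qed.

Lemma up_down r (d : GTV r) ia ib j1 j2 : 0 < ia < 2 ^ r.+1 -> 0 < ib < 2 ^ r.+1 ->
  0 < ia %/ 2 ^ j1 -> ia %/ 2 ^ j1 = ib %/ 2 ^ j2 ->
  exists s, [/\ path (@gadj r) (tv d ia) s, last (tv d ia) s = tv d ib & size s = j1 + j2].
Proof.
move=> /andP[_ Ha] /andP[_ Hb] P E.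
have [Pa La] := upw_path d P Ha.
have P' : 0 < ib %/ 2 ^ j2 by rewrite -E.
have [Pb Lb] := upw_path d P' Hb.
exists (upw d ia j1 ++ rev (belast (tv d ib) (upw d ib j2))).
rewrite cat_path last_cat Pa La E -Lb rev_path last_rev_belast size_cat size_rev size_belast !size_upw.
split => //; rewrite (eq_path (e' := @gadj r)) //.
by move=> x y /=; rewrite gadj_sym.
Qed.


Lemma V1_notV2 r (a : GTV r) : inV1 a -> ~~ inV2 a.
Proof. by rewrite /inV1 /inV2 => /andP[-> ->]. Qed.

Lemma gidx_rng r (a : GTV r) : 0 < gidx a < 2 ^ r.+1.
Proof. by rewrite gidx_gt0 gidx_lt. Qed.

Lemma block r (S : {set GTV r}) (u v x : GTV r) c :
  mutual_visibility S -> u \in S -> v \in S -> x \in S ->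
  inV1 u -> inV1 v -> ~~ inV2 x -> u != v -> x != v ->
  c./2 = gidx v ->
  (desc (gidx u) c <-> desc (gidx x) c).
Proof.
move=> MV uS vS xS u1 v1 x2 uv xv Hc.
have [p [[Hp Hl Hmin] Hvis]] := MV u x uS xS.
case Hh: (has (fun y => gidx y == gidx v) (u :: p)); last first.
  rewrite -Hl; apply: walk_sep Hp _ Hc => y Hy; apply/negP => E.
  by move: Hh => /negbT /hasPn /(_ y Hy); rewrite E.
exfalso.
move/hasP: Hh => [y yin /eqP yn].
have yv : y != v.
  apply/eqP => E; subst y; case: (Hvis v yin vS) => E; [by rewrite E eqxx in uv | by rewrite E eqxx in xv].
have ycopy : gcopy y = false.
  case E: (gcopy y) => //; case/eqP: yv; apply: vert_eq => //.
  by rewrite E; case/andP: v1.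
have vnl : gidx v < 2 ^ r by move: v1; rewrite /inV1 /quasi_leaf -ltnNge => /andP[].
have unl : gidx u < 2 ^ r by move: u1; rewrite /inV1 /quasi_leaf -ltnNge => /andP[].
have ynl : ~~ quasi_leaf y by rewrite /quasi_leaf yn -ltnNge.
have yp : y \in p.
  move: yin; rewrite inE => /orP[/eqP E|//]; subst y.
  by move: u1; rewrite /inV1 ycopy andbF.
move: Hp Hl Hmin Hvis; case/splitPr: yp => p1 p2 Hp Hl Hmin Hvis.
have : has (@quasi_leaf r) p1.
  case Hq: (has _ p1) => //; move/negbT/hasPn: Hq => Hn.
  have Hw : path (@gadj r) u (p1 ++ [:: y]).
    by move: Hp; rewrite !cat_path /= andbT => /andP[-> /andP[-> _]].
  have Hall : forall w, w \in u :: p1 ++ [:: y] -> ~~ quasi_leaf w.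
    move=> w; rewrite in_cons mem_cat mem_seq1 => /or3P[/eqP ->|/Hn //|/eqP ->] //.
    by case/andP: u1.
  have := walk_copy Hw Hall; rewrite last_cat /= ycopy.
  by case/andP: u1 => _ ->.
case/hasP => z zin zq.
move: Hp Hl Hmin; case/splitPr: zin => q1 q3 Hp Hl Hmin.
move: Hp; rewrite -catA cat_path /= cat_path /= => /and5P[Pq1 Az Pq3 Ay Pp2].
move: Hl; rewrite last_cat /= => Hl.
have W1 : path (@gadj r) u (q1 ++ [:: z]) by rewrite cat_path Pq1 /= Az.
have W2 : path (@gadj r) z (q3 ++ [:: y]) by rewrite cat_path Pq3 /= Ay.
have [a1 [b1 [P1 E1 L1]]] := walk_anc W1.
have [a2 [b2 [P2 E2 L2]]] := walk_anc W2.
have [a3 [b3 [P3 E3 L3]]] := walk_anc Pp2.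
rewrite last_cat /= in E1; rewrite last_cat /= yn in E2; rewrite Hl in E3.
rewrite size_cat /= addn1 in L1; rewrite size_cat /= addn1 in L2.
rewrite yn in P3 E3.
have zl : 2 ^ r <= gidx z by [].
have [s1 [Ps1 Ls1 Ss1]] : exists s1, [/\ path (@gadj r) u s1, last u s1 = v &
     size s1 <= size q1 + size q3].
  case: (leqP a2 b1) => H.
  - have Ea : gidx u %/ 2 ^ a1 = gidx v %/ 2 ^ (b2 + (b1 - a2)).
      by rewrite E1 -{1}(subnKC H) divD E2 -divD.
    have a2p : 0 < a2.
      case: a2 {L2 H Ea} E2 P2 => // E2 _; move: E2; rewrite expn0 divn1 => E2.
      have := leq_div (gidx v) (2 ^ b2); rewrite -E2 => H'.
      by move: (leq_ltn_trans H' vnl); rewrite ltnNge zl.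
    have [s [Ps Ls Ss]] := up_down u (gidx_rng u) (gidx_rng v) P1 Ea.
    exists s; rewrite !tv_id ?V1_notV2 // in Ps Ls; split => //.
    rewrite Ss; move: L1 L2 a2p H; move: (size q1) (size q3) => k1 k3; clear; lia.
  - have Ea : gidx u %/ 2 ^ (a1 + (a2 - b1)) = gidx v %/ 2 ^ b2.
      by rewrite divD E1 -divD subnKC ?E2 // ltnW.
    have Pa : 0 < gidx u %/ 2 ^ (a1 + (a2 - b1)) by rewrite Ea -E2.
    have b1p : 0 < b1.
      case: b1 {L1 H Ea Pa} E1 => // E1; move: E1; rewrite expn0 divn1 => E1.
      have := leq_div (gidx u) (2 ^ a1); rewrite E1 => H'.
      by move: (leq_ltn_trans H' unl); rewrite ltnNge zl.
    have [s [Ps Ls Ss]] := up_down u (gidx_rng u) (gidx_rng v) Pa Ea.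
    exists s; rewrite !tv_id ?V1_notV2 // in Ps Ls; split => //.
    rewrite Ss; move: L1 L2 b1p H; move: (size q1) (size q3) => k1 k3; clear; lia.
have [s2 [Ps2 Ls2 Ss2]] := up_down u (gidx_rng v) (gidx_rng x) P3 E3.
rewrite (tv_id _ x2) tv_id ?V1_notV2 // in Ps2 Ls2.
have := Hmin (s1 ++ s2); rewrite cat_path Ps1 Ls1 Ps2 last_cat Ls1 Ls2 => /(_ isT erefl).
rewrite !size_cat /= Ss2 => Hs.
move: Hs Ss1 L3; move: (size q1) (size q3) (size p2) (size s1) => k1 k3 k2 k4; clear; lia.
Qed.


Fixpoint lmf (r fuel c : nat) : nat :=
  if fuel is f'.+1 then (if c < 2 ^ r.-1 then lmf r f' c.*2 else c) else c.

Lemma desc_half m n : m./2 = n -> desc m n.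
Proof. by move=> H; exists 1; rewrite expn1 divn2. Qed.

Lemma exp_pred r : 0 < r -> 2 ^ r = (2 ^ r.-1).*2.
Proof. by move=> r0; rewrite -mul2n -expnS prednK. Qed.

Lemma lmf_spec r fuel c : 0 < r -> 0 < c < 2 ^ r -> 2 ^ r.-1 <= c * 2 ^ fuel ->
  2 ^ r.-1 <= lmf r fuel c < 2 ^ r /\ desc (lmf r fuel c) c.
Proof.
move=> r0; have E := exp_pred r0.
elim: fuel c => [|f IH] c /= Hc Hf.
  by move: Hf; rewrite expn0 muln1 => Hf; rewrite Hf /=; case/andP: Hc => _ ->; split => //; apply: desc_refl.
case: ifP => H.
- have Hc' : 0 < c.*2 < 2 ^ r by rewrite E; lia.
  have Hf' : 2 ^ r.-1 <= c.*2 * 2 ^ f by rewrite -mul2n mulnAC -expnS mulnC.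
  have [R D] := IH _ Hc' Hf'; split => //.
  by apply: desc_trans D _; apply: desc_half; rewrite -divn2 -mul2n mulKn.
- by rewrite leqNgt H /=; case/andP: Hc => _ ->; split => //; apply: desc_refl.
Qed.

Definition lm r c := lmf r r c.

Lemma lm_spec r c : 0 < r -> 0 < c < 2 ^ r -> 2 ^ r.-1 <= lm r c < 2 ^ r /\ desc (lm r c) c.
Proof.
move=> r0 Hc; apply: lmf_spec => //.
apply: leq_trans (leq_pmull _ _) ; first by rewrite leq_exp2l // leq_pred.
by case/andP: Hc.
Qed.

Definition kfun r n m :=
  if descb m n.*2 then lm r n.*2.+1 else if descb m n.*2.+1 then lm r n.*2 else lm r n.

Lemma kfun_cases r n m : 0 < r -> 0 < n < 2 ^ r -> m < 2 ^ r ->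
  let k := kfun r n m in
  2 ^ r.-1 <= k < 2 ^ r /\ desc k n /\
  [\/ desc m n.*2 /\ desc k n.*2.+1,
      [/\ ~ desc m n.*2, desc m n.*2.+1 & desc k n.*2] |
      [/\ ~ desc m n.*2, ~ desc m n.*2.+1 & desc k n]].
Proof.
move=> r0 Hn Hm k; have E := exp_pred r0.
have n0 : 0 < n by case/andP: Hn.
have d1 : desc n.*2 n by apply: desc_half; lia.
have d2 : desc n.*2.+1 n by apply: desc_half; lia.
have p1 : 0 < n.*2 by lia.
rewrite /k /kfun; case: (descP m p1) => [H1|H1].
- have Hc : 0 < n.*2.+1 < 2 ^ r by have := desc_le H1; rewrite E; lia.
  have [R D] := lm_spec r0 Hc; do 2?split => //.
  + exact: desc_trans D d2.
  + by constructor 1.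
- case: (descP m (ltn0Sn n.*2)) => [H2|H2].
  + have Hc : 0 < n.*2 < 2 ^ r by have := desc_le H2; lia.
    have [R D] := lm_spec r0 Hc; do 2?split => //.
    * exact: desc_trans D d1.
    * by constructor 2.
  + have [R D] := lm_spec r0 Hn; do 2?split => //.
    by constructor 3.
Qed.

Lemma kU1 r n m l : 0 < r -> 0 < n < 2 ^ r -> m < 2 ^ r ->
  desc l (kfun r n m) -> l <> n ->
  (desc m n.*2 <-> desc l n.*2) -> (desc m n.*2.+1 <-> desc l n.*2.+1) -> False.
Proof.
move=> r0 Hn Hm Hl ln I1 I2; have n0 : 0 < n by case/andP: Hn.
have [_ [D C]] := kfun_cases r0 Hn Hm.
case: C => [[H1 H2]|[H1 H2 H3]|[H1 H2 H3]].
- have := desc_trans Hl H2; rewrite -I2 => H3.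
  exact: desc_excl n0 H1 H3.
- by apply: H1; rewrite I1; apply: desc_trans Hl H3.
- case: (desc_split (desc_trans Hl H3) ln) => H.
  + by apply: H1; rewrite I1.
  + by apply: H2; rewrite I2.
Qed.

Lemma kU2 r n m t : 0 < r -> 0 < n < 2 ^ r -> m < 2 ^ r ->
  desc t n -> t <> n -> desc (kfun r n m) t ->
  (desc m n.*2 <-> desc t n.*2) -> (desc m n.*2.+1 <-> desc t n.*2.+1) -> False.
Proof.
move=> r0 Hn Hm Ht tn Hk I1 I2; have n0 : 0 < n by case/andP: Hn.
have [_ [D C]] := kfun_cases r0 Hn Hm.
case: C => [[H1 H2]|[H1 H2 H3]|[H1 H2 H3]].
- have := desc_trans Hk (proj1 I1 H1) => H3.
  exact: desc_excl n0 H3 H2.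
- have := desc_trans Hk (proj1 I2 H2) => H4.
  exact: desc_excl n0 H3 H4.
- case: (desc_split Ht tn) => H.
  + by apply: H1; rewrite I1.
  + by apply: H2; rewrite I2.
Qed.


Lemma leafv r (d : GTV r) k h : 0 < r -> 2 ^ r.-1 <= k < 2 ^ r -> (h = k.*2 \/ h = k.*2.+1) ->
  [/\ gidx (tv d h) = h, quasi_leaf (tv d h), ~~ inV2 (tv d h) & desc h k].
Proof.
move=> r0 Hk Hh; have E := exp_pred r0.
have Hr : 0 < h < 2 ^ r.+1 by rewrite expnS; lia.
have [E1 E2] := tv_val d Hr.
have ql : quasi_leaf (tv d h) by rewrite /quasi_leaf E1; lia.
split => //; first by rewrite /inV2 ql.
by apply: desc_half; lia.
Qed.

Lemma twin r (d : GTV r) k : 0 < r -> 2 ^ r.-1 <= k < 2 ^ r ->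
  twin_quasi_leaves (tv d k.*2) (tv d k.*2.+1).
Proof.
move=> r0 Hk.
have [A1 A2 A3 _] := leafv d r0 Hk (or_introl erefl).
have [B1 B2 B3 _] := leafv d r0 Hk (or_intror erefl).
split => //.
  by apply/eqP => /(congr1 (@gidx r)); rewrite A1 B1; lia.
apply/setP => w; rewrite !inE /gadj /gchild A1 B1 A2 B2 !orbT !andbT.
have Hw := gidx_lt w; have E := exp_pred r0.
have -> : ((gidx w)./2 == k.*2) = false by apply/negbTE; rewrite expnS in Hw; lia.
have -> : ((gidx w)./2 == k.*2.+1) = false by apply/negbTE; rewrite expnS in Hw; lia.
have -> : (k.*2)./2 = k by lia.
by have -> : (k.*2.+1)./2 = k by lia.
Qed.

Lemma u0_spec r (A : {set GTV r}) v : v \in A -> 1 < #|A| ->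
  odflt v [pick w in A | w != v] \in A /\ odflt v [pick w in A | w != v] != v.
Proof.
move=> vA cA; case: pickP => [w /andP[wA wv] | H] //=.
exfalso; have : A \subset [set v].
  apply/subsetP => w wA; rewrite inE; have := H w; rewrite wA /=.
  by move/negbT; rewrite negbK.
by move/subset_leq_card; rewrite cards1; lia.
Qed.

Lemma SV1 r (S : {set GTV r}) v : v \in S :&: V1 r -> [/\ v \in S, inV1 v & 0 < gidx v < 2 ^ r].
Proof.
rewrite in_setI inE => /andP[-> H]; split => //.
by rewrite gidx_gt0; move: H; rewrite /inV1 /quasi_leaf -ltnNge => /andP[].
Qed.


Theorem mainTheorem2 (r : nat) (S : {set GTV r}) :
  2 <= r ->
  mutual_visibility S ->
  2 <= #|S :&: V1 r| ->
  exists f : GTV r -> GTV r * GTV r,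
    (forall v, v \in S :&: V1 r ->
       [/\ twin_quasi_leaves (f v).1 (f v).2,
           leaf_of_subtree v (f v).1, leaf_of_subtree v (f v).2,
           (f v).1 \notin S & (f v).2 \notin S]) /\
    (forall v w, v \in S :&: V1 r -> w \in S :&: V1 r -> v != w ->
       [disjoint [:: (f v).1; (f v).2] & [:: (f w).1; (f w).2]]).
Proof.
move=> r2 MV card.
have r0 : 0 < r by apply: ltnW.
pose u0 v := odflt v [pick w in S :&: V1 r | w != v].
pose kk v := kfun r (gidx v) (gidx (u0 v)).
have Hk : forall v, v \in S :&: V1 r ->
  [/\ 0 < gidx v < 2 ^ r, gidx (u0 v) < 2 ^ r, 2 ^ r.-1 <= kk v < 2 ^ r, desc (kk v) (gidx v) &
   forall x c, x \in S -> ~~ inV2 x -> x != v -> c./2 = gidx v ->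
     (desc (gidx (u0 v)) c <-> desc (gidx x) c)].
  move=> v vin; have [vS v1 vr] := SV1 vin.
  have [u0in u0v] := u0_spec vin card.
  have [u0S u01 u0r] := SV1 u0in.
  have u0lt : gidx (u0 v) < 2 ^ r by case/andP: u0r.
  have [kr [kd _]] := kfun_cases r0 vr u0lt.
  split => // x c xS x2 xv Hc.
  exact: block MV u0S vS xS u01 v1 x2 u0v xv Hc.
have Hleaf : forall v h, v \in S :&: V1 r -> (h = (kk v).*2 \/ h = (kk v).*2.+1) ->
    [/\ gidx (tv v h) = h, leaf_of_subtree v (tv v h) & tv v h \notin S].
  move=> v h vin Hh; have [vr u0lt kr kd BL] := Hk v vin.
  have [vS v1 _] := SV1 vin.
  have [A1 A2 A3 A4] := leafv v r0 kr Hh.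
  split => //.
    rewrite /leaf_of_subtree A2 A1 /=; apply: desc_bound (desc_trans A4 kd) _ _.
      by case/andP: vr.
    by rewrite expnS; move: kr (exp_pred r0) Hh; clear; lia.
  apply/negP => aS.
  have av : tv v h != v by apply/eqP => E; move: v1; rewrite /inV1 -E A2.
  have hn : h <> gidx v by move: vr kr (exp_pred r0) Hh; clear; lia.
  apply: (kU1 r0 vr u0lt A4 hn); rewrite -A1; apply: BL => //; move: vr; clear; lia.
have H2 : forall v w, v \in S :&: V1 r -> w \in S :&: V1 r -> v != w ->
    kk v = kk w -> desc (gidx v) (gidx w) -> False.
  move=> v w vin win vw E D.
  have [vr _ _ kdv _] := Hk v vin.
  have [wr u0lt _ _ BL] := Hk w win.
  have [vS v1 _] := SV1 vin; have [_ w1 _] := SV1 win.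
  have tn : gidx v <> gidx w.
    move=> Ei; case/eqP: vw; apply: vert_eq => //.
    by case/andP: v1 => _ ->; case/andP: w1 => _ ->.
  rewrite E in kdv.
  apply: (kU2 r0 wr u0lt D tn kdv); apply: BL => //; try exact: V1_notV2;
    by move: wr; clear; lia.
exists (fun v => (tv v (kk v).*2, tv v (kk v).*2.+1)); split.
  move=> v vin /=.
  have [vr _ kr _ _] := Hk v vin.
  have [_ L1 N1] := Hleaf v _ vin (or_introl erefl).
  have [_ L2 N2] := Hleaf v _ vin (or_intror erefl).
  by split => //; apply: twin.
move=> v w vin win vw /=.
have kne : kk v <> kk w.
  move=> E; have [_ _ _ kdv _] := Hk v vin; have [_ _ _ kdw _] := Hk w win.
  rewrite E in kdv; case: (desc_comp kdv kdw) => D.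
  - exact: H2 vin win vw E D.
  - by apply: H2 win vin _ (esym E) D; rewrite eq_sym.
have [A1 _ _] := Hleaf v _ vin (or_introl erefl).
have [B1 _ _] := Hleaf v _ vin (or_intror erefl).
have [C1 _ _] := Hleaf w _ win (or_introl erefl).
have [D1 _ _] := Hleaf w _ win (or_intror erefl).
have ne : forall (x y : GTV r), gidx x <> gidx y -> (x == y) = false.
  by move=> x y H; apply/negP => /eqP E; apply: H; rewrite E.
rewrite disjoint_has /= !inE.
rewrite !ne ?A1 ?B1 ?C1 ?D1 //; move: kne; clear; lia.
Qed.
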